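(* (1) If $(X,a,\eta_a,\mu_a)$ is a $\mathcal V$-category, then $(TX,Ta,T\eta_a,T\mu_a\cdot\kappa_{a,a})$ is a $\mathcal V$-category. (2) If $(f,\varphi_f):(X,a,\eta_a,\mu_a)\to(Y,b,\eta_b,\mu_b)$ is a $\mathcal V$-functor, then $(Tf,\varphi_{Tf}):(TX,Ta)\to(TY,Tb)$ with $\varphi_{Tf}:=\kappa^{-1}_{b,f}\cdot T\varphi_f\cdot\kappa_{f,a}$ is a $\mathcal V$-functor. (3) If $\zeta:(f,\varphi_f)\to(g,\varphi_g)$ is a $\mathcal V$-natural transformation between $\mathcal V$-functors $(X,a)\to(Y,b)$, then $\kappa^{-1}_{b,f}\cdot T\zeta\cdot\kappa_{g,a}$ is a $\mathcal V$-natural transformation $(Tf,\varphi_{Tf})\to(Tg,\varphi_{Tg})$.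
   Context: Setting. $\mathcal V$ is a complete, cocomplete symmetric monoidal closed category with tensor $\otimes$, unit $I$ and chosen initial object $\bot$; coherence isomorphisms are suppressed. $\mathcal V\text{-}\mathbf{Rel}$: objects sets; 1-cells $r:X\rightharpoonup Y$ families of $\mathcal V$-objects $r(x,y)$; 2-cells families of morphisms $r(x,y)\to r'(x,y)$, composed vertically ($\cdot$) componentwise; horizontal composition $(sr)(x,z)=\sum_yr(x,y)\otimes s(y,z)$ (on 2-cells via $\otimes,\sum$); juxtaposition denotes whiskering. A function $f$ is the $\mathcal V$-relation with $f(x,y)=I$ if $f(x)=y$, $\bot$ otherwise; transpose $r^\circ(y,x)=r(x,y)$; $f\dashv f^\circ$ with unit $\lambda_f$, counit $\rho_f$. $\mathbb T=(T,e,m)$ is a monad on Set with lax extension to $\mathcal V\text{-}\mathbf{Rel}$: a lax functor $T$ agreeing with the Set-functor on functions, strictly functorial on 2-cells, with natural comparisons $\kappa_{s,r}:TsTr\to T(sr)$, $\kappa_{t,sr}\cdot(Tt\kappa_{s,r})=\kappa_{ts,r}\cdot(\kappa_{t,s}Tr)$, $\kappa_{r,1}=\kappa_{1,r}=1$, and $T(f^\circ)=(Tf)^\circ$ for functions $f$ (hence $\kappa_{s,f}$ and $\kappa_{f^\circ,t}$ are invertible for functions $f$); plus 2-cells $\alpha_r:e_Yr\to Tre_X$, $\beta_r:m_YT^2r\to Trm_X$ (identities for functions) satisfying the compatibility conditions (mon) $(\beta_re_{TX})\cdot(m_Y\alpha_{Tr})=1_{Tr}$; $(\beta_rTe_X)\cdot(m_Y\kappa^{-1}_{Tr,e_X})\cdot(m_YT\alpha_r)\cdot(m_Y\kappa_{e_Y,r})=1_{Tr}$;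 $(\beta_rTm_X)\cdot(m_Y\kappa^{-1}_{Tr,m_X})\cdot(m_YT\beta_r)\cdot(m_Y\kappa_{m_Y,T^2r})=(\beta_rm_{TX})\cdot(m_Y\beta_{Tr})$; (coh) $\alpha_{sr}=(\kappa_{s,r}e_X)\cdot(Ts\alpha_r)\cdot(\alpha_sr)$, $\beta_{sr}\cdot(m_ZT\kappa_{s,r})\cdot(m_Z\kappa_{Ts,Tr})=(\kappa_{s,r}m_X)\cdot(Ts\beta_r)\cdot(\beta_sT^2r)$; (nat) $(T\varphi e_X)\cdot\alpha_r=\alpha_{r'}\cdot(e_Y\varphi)$, $(T\varphi m_X)\cdot\beta_r=\beta_{r'}\cdot(m_YT^2\varphi)$. $\mathcal V\text{-}\mathbf{Cat}$: a $\mathcal V$-category $(X,a,\eta_a,\mu_a)$ is a set $X$ with $a:X\rightharpoonup X$, $\eta_a:1_X\to a$, $\mu_a:aa\to a$ such that $\mu_a\cdot(\eta_aa)=1_a=\mu_a\cdot(a\eta_a)$ and $\mu_a\cdot(\mu_aa)=\mu_a\cdot(a\mu_a)$. A $\mathcal V$-functor $(f,\varphi_f):(X,a)\to(Y,b)$ is a function $f$ with $\varphi_f:fa\to bf$ such that $\varphi_f\cdot(f\eta_a)=\eta_bf$ and $\varphi_f\cdot(f\mu_a)=(\mu_bf)\cdot(b\varphi_f)\cdot(\varphi_fa)$. A $\mathcal V$-natural transformation $\zeta:(f,\varphi_f)\to(g,\varphi_g)$ is a 2-cell $\zeta:ga\to bf$ with $\zeta=(\mu_bf)\cdot(b\varphi_f)\cdot(\zeta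 a)\cdot(g\eta_aa)$ and $\zeta=(\mu_bf)\cdot(b\zeta)\cdot(bg\eta_a)\cdot\varphi_g$. (This is the 2-category of $(\mathbb T,\mathcal V)$-categories for the identity monad with trivial extension.) *)

(* Defs.v *)
From Stdlib Require Import ClassicalEpsilon.

Record SMCC := {
  ob : Type;
  hom : ob -> ob -> Type;
  idm : forall A, hom A A;
  cmp : forall {A B C : ob}, hom B C -> hom A B -> hom A C;
  cmp_id_l : forall A B (f : hom A B), cmp (idm B) f = f;
  cmp_id_r : forall A B (f : hom A B), cmp f (idm A) = f;
  cmp_assoc : forall A B C D (f : hom A B) (g : hom B C) (h : hom C D),
      cmp h (cmp g f) = cmp (cmp h g) f;
  ten : ob -> ob -> ob;
  tmap : forall {A B A' B' : ob}, hom A A' -> hom B B' -> hom (ten A B) (ten A' B');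
  tmap_id : forall A B, tmap (idm A) (idm B) = idm (ten A B);
  tmap_cmp : forall A B C A' B' C' (f : hom A B) (f' : hom B C)
      (g : hom A' B') (g' : hom B' C'),
      tmap (cmp f' f) (cmp g' g) = cmp (tmap f' g') (tmap f g);
  unit : ob;
  asc : forall A B C, hom (ten (ten A B) C) (ten A (ten B C));
  asc_inv : forall A B C, hom (ten A (ten B C)) (ten (ten A B) C);
  asc_iso1 : forall A B C, cmp (asc_inv A B C) (asc A B C) = idm _;
  asc_iso2 : forall A B C, cmp (asc A B C) (asc_inv A B C) = idm _;
  asc_nat : forall A B C A' B' C' (f : hom A A') (g : hom B B') (h : hom C C'),
      cmp (asc A' B' C') (tmap (tmap f g) h) = cmp (tmap f (tmap g h)) (asc A B C);
  lu : forall A, hom (ten unit A) A;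
  lu_inv : forall A, hom A (ten unit A);
  lu_iso1 : forall A, cmp (lu_inv A) (lu A) = idm _;
  lu_iso2 : forall A, cmp (lu A) (lu_inv A) = idm _;
  lu_nat : forall A B (f : hom A B), cmp (lu B) (tmap (idm unit) f) = cmp f (lu A);
  ru : forall A, hom (ten A unit) A;
  ru_inv : forall A, hom A (ten A unit);
  ru_iso1 : forall A, cmp (ru_inv A) (ru A) = idm _;
  ru_iso2 : forall A, cmp (ru A) (ru_inv A) = idm _;
  ru_nat : forall A B (f : hom A B), cmp (ru B) (tmap f (idm unit)) = cmp f (ru A);
  pentagon : forall A B C D,
      cmp (asc A B (ten C D)) (asc (ten A B) C D)
      = cmp (tmap (idm A) (asc B C D))
            (cmp (asc A (ten B C) D) (tmap (asc A B C) (idm D)));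
  triangle : forall A B,
      cmp (tmap (idm A) (lu B)) (asc A unit B) = tmap (ru A) (idm B);
  sym : forall A B, hom (ten A B) (ten B A);
  sym_invol : forall A B, cmp (sym B A) (sym A B) = idm _;
  sym_nat : forall A B A' B' (f : hom A A') (g : hom B B'),
      cmp (sym A' B') (tmap f g) = cmp (tmap g f) (sym A B);
  hexagon : forall A B C,
      cmp (asc B C A) (cmp (sym A (ten B C)) (asc A B C))
      = cmp (tmap (idm B) (sym A C)) (cmp (asc B A C) (tmap (sym A B) (idm C)));
  ihom : ob -> ob -> ob;
  curry : forall {A B C : ob}, hom (ten A B) C -> hom A (ihom B C);
  uncurry : forall {A B C : ob}, hom A (ihom B C) -> hom (ten A B) C;
  curry_uncurry : forall A B C (h : hom A (ihom B C)), curry (uncurry h) = h;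
  uncurry_curry : forall A B C (h : hom (ten A B) C), uncurry (curry h) = h;
  curry_nat : forall A A' B C (h : hom (ten A B) C) (g : hom A' A),
      curry (cmp h (tmap g (idm B))) = cmp (curry h) g;
  bot : ob;
  bot_map : forall A, hom bot A;
  bot_uniq : forall A (h : hom bot A), h = bot_map A;
  Sum : forall (J : Type), (J -> ob) -> ob;
  inj : forall {J : Type} (F : J -> ob) (j : J), hom (F j) (Sum J F);
  copair : forall {J : Type} {F : J -> ob} {C : ob},
      (forall j, hom (F j) C) -> hom (Sum J F) C;
  copair_inj : forall J (F : J -> ob) C (G : forall j, hom (F j) C) j,
      cmp (copair G) (inj F j) = G j;
  copair_uniq : forall J (F : J -> ob) C (G : forall j, hom (F j) C) (h : hom (Sum J F) C),
      (forall j, cmp h (inj F j) = G j) -> h = copair G;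
  Coeq : forall {A B : ob}, hom A B -> hom A B -> ob;
  coeqm : forall {A B : ob} (f g : hom A B), hom B (Coeq f g);
  coeqm_eq : forall A B (f g : hom A B), cmp (coeqm f g) f = cmp (coeqm f g) g;
  coeq_desc : forall {A B C : ob} (f g : hom A B) (h : hom B C),
      cmp h f = cmp h g -> hom (Coeq f g) C;
  coeq_desc_eq : forall A B C (f g : hom A B) (h : hom B C) (H : cmp h f = cmp h g),
      cmp (coeq_desc f g h H) (coeqm f g) = h;
  coeq_uniq : forall A B C (f g : hom A B) (h : hom B C) (H : cmp h f = cmp h g)
      (k : hom (Coeq f g) C), cmp k (coeqm f g) = h -> k = coeq_desc f g h H;
  Prod : forall (J : Type), (J -> ob) -> ob;
  proj : forall {J : Type} (F : J -> ob) (j : J), hom (Prod J F) (F j);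
  tuple : forall {J : Type} {F : J -> ob} {C : ob},
      (forall j, hom C (F j)) -> hom C (Prod J F);
  proj_tuple : forall J (F : J -> ob) C (G : forall j, hom C (F j)) j,
      cmp (proj F j) (tuple G) = G j;
  tuple_uniq : forall J (F : J -> ob) C (G : forall j, hom C (F j)) (h : hom C (Prod J F)),
      (forall j, cmp (proj F j) h = G j) -> h = tuple G;
  Equ : forall {A B : ob}, hom A B -> hom A B -> ob;
  equm : forall {A B : ob} (f g : hom A B), hom (Equ f g) A;
  equm_eq : forall A B (f g : hom A B), cmp f (equm f g) = cmp g (equm f g);
  equ_lift : forall {A B C : ob} (f g : hom A B) (h : hom C A),
      cmp f h = cmp g h -> hom C (Equ f g);
  equ_lift_eq : forall A B C (f g : hom A B) (h : hom C A) (H : cmp f h = cmp g h),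
      cmp (equm f g) (equ_lift f g h H) = h;
  equ_uniq : forall A B C (f g : hom A B) (h : hom C A) (H : cmp f h = cmp g h)
      (k : hom C (Equ f g)), cmp (equm f g) k = h -> k = equ_lift f g h H
}.

Arguments idm {V} A : rename.
Arguments cmp {V A B C} _ _ : rename.
Arguments ten {V} _ _ : rename.
Arguments tmap {V A B A' B'} _ _ : rename.
Arguments unit {V} : rename.
Arguments asc {V} A B C : rename.
Arguments asc_inv {V} A B C : rename.
Arguments lu {V} A : rename.
Arguments lu_inv {V} A : rename.
Arguments ru {V} A : rename.
Arguments ru_inv {V} A : rename.
Arguments sym {V} A B : rename.
Arguments ihom {V} _ _ : rename.
Arguments curry {V A B C} _ : rename.
Arguments uncurry {V A B C} _ : rename.
Arguments bot {V} : rename.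
Arguments bot_map {V} A : rename.
Arguments Sum {V} J F : rename.
Arguments inj {V J} F j : rename.
Arguments copair {V J F C} _ : rename.

Section VRel.
Variable V : SMCC.

Definition Rel (X Y : Type) := X -> Y -> ob V.

Definition Cell {X Y : Type} (r r' : Rel X Y) := forall x y, hom V (r x y) (r' x y).

Definition idcell {X Y : Type} (r : Rel X Y) : Cell r r := fun x y => idm (r x y).

Definition vcomp {X Y : Type} {r r' r'' : Rel X Y} (psi : Cell r' r'') (phi : Cell r r')
  : Cell r r'' := fun x y => cmp (psi x y) (phi x y).

Definition frel {X Y : Type} (f : X -> Y) : Rel X Y :=
  fun x y => if excluded_middle_informative (f x = y) then @unit V else @bot V.

Definition idrel (X : Type) : Rel X X := frel (fun x : X => x).

Definition transp {X Y : Type} (r : Rel X Y) : Rel Y X := fun y x => r x y.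

(* horizontal composition  s r  (first r, then s):
   (s r)(x,z) = Sum_y r(x,y) (x) s(y,z) *)
Definition rcomp {X Y Z : Type} (s : Rel Y Z) (r : Rel X Y) : Rel X Z :=
  fun x z => Sum Y (fun y => ten (r x y) (s y z)).

Definition hcomp {X Y Z : Type} {s s' : Rel Y Z} {r r' : Rel X Y}
  (psi : Cell s s') (phi : Cell r r') : Cell (rcomp s r) (rcomp s' r') :=
  fun x z => copair (fun y => cmp (inj (fun y => ten (r' x y) (s' y z)) y)
                                  (tmap (phi x y) (psi y z))).

Definition lwhisk {X Y Z : Type} (t : Rel Y Z) {r r' : Rel X Y} (phi : Cell r r')
  : Cell (rcomp t r) (rcomp t r') := hcomp (idcell t) phi.
Definition rwhisk {X Y Z : Type} {s s' : Rel Y Z} (psi : Cell s s') (r : Rel X Y)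
  : Cell (rcomp s r) (rcomp s' r) := hcomp psi (idcell r).

Definition cellcast {X Y : Type} {r r' : Rel X Y} (e : r = r') : Cell r r' :=
  match e in _ = r0 return Cell r r0 with eq_refl => idcell r end.

Definition distR {J : Type} (F : J -> ob V) (B C : ob V)
  (G : forall j, hom V (ten (F j) B) C) : hom V (ten (Sum J F) B) C :=
  uncurry (copair (fun j => curry (G j))).

Definition distL (A : ob V) {J : Type} (F : J -> ob V) (C : ob V)
  (G : forall j, hom V (ten A (F j)) C) : hom V (ten A (Sum J F)) C :=
  cmp (distR F A C (fun j => cmp (G j) (sym (F j) A))) (sym A (Sum J F)).

Definition botten (A C : ob V) : hom V (ten (@bot V) A) C :=
  uncurry (bot_map (ihom A C)).

Definition assocR {W X Y Z : Type} (t : Rel Y Z) (s : Rel X Y) (r : Rel W X)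
  : Cell (rcomp t (rcomp s r)) (rcomp (rcomp t s) r) :=
  fun w z => copair (fun y =>
    distR (fun x => ten (r w x) (s x y)) (t y z) _
      (fun x => cmp (inj (fun x => ten (r w x) (rcomp t s x z)) x)
                  (cmp (tmap (idm (r w x)) (inj (fun y => ten (s x y) (t y z)) y))
                       (asc (r w x) (s x y) (t y z))))).

Definition assocL {W X Y Z : Type} (t : Rel Y Z) (s : Rel X Y) (r : Rel W X)
  : Cell (rcomp (rcomp t s) r) (rcomp t (rcomp s r)) :=
  fun w z => copair (fun x =>
    distL (r w x) (fun y => ten (s x y) (t y z)) _
      (fun y => cmp (inj (fun y => ten (rcomp s r w y) (t y z)) y)
                  (cmp (tmap (inj (fun x => ten (r w x) (s x y)) x) (idm (t y z)))
                       (asc_inv (r w x) (s x y) (t y z))))).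

Definition runit {X Y : Type} (r : Rel X Y) : Cell (rcomp r (idrel X)) r :=
  fun x y => copair (fun x' =>
    match excluded_middle_informative (x = x') as d
      return hom V (ten (if d then @unit V else @bot V) (r x' y)) (r x y) with
    | left e => cmp (match e in _ = x0 return hom V (r x0 y) (r x y) with
                     | eq_refl => idm (r x y) end) (lu (r x' y))
    | right _ => botten (r x' y) (r x y)
    end).

Definition runit_inv {X Y : Type} (r : Rel X Y) : Cell r (rcomp r (idrel X)) :=
  fun x y => cmp (inj (fun x' => ten (idrel X x x') (r x' y)) x)
    (match excluded_middle_informative (x = x) as d
       return hom V (r x y) (ten (if d then @unit V else @bot V) (r x y)) with
     | left _ => lu_inv (r x y)
     | right n => False_rect _ (n eq_refl)
     end).

Definition lunit {X Y : Type} (r : Rel X Y) : Cell (rcomp (idrel Y) r) r :=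
  fun x y => copair (fun y' =>
    match excluded_middle_informative (y' = y) as d
      return hom V (ten (r x y') (if d then @unit V else @bot V)) (r x y) with
    | left e => cmp (match e in _ = y0 return hom V (r x y') (r x y0) with
                     | eq_refl => idm (r x y') end) (ru (r x y'))
    | right _ => cmp (botten (r x y') (r x y)) (sym (r x y') (@bot V))
    end).

Definition lunit_inv {X Y : Type} (r : Rel X Y) : Cell r (rcomp (idrel Y) r) :=
  fun x y => cmp (inj (fun y' => ten (r x y') (idrel Y y' y)) y)
    (match excluded_middle_informative (y = y) as d
       return hom V (r x y) (ten (r x y) (if d then @unit V else @bot V)) with
     | left _ => ru_inv (r x y)
     | right n => False_rect _ (n eq_refl)
     end).

Definition isVCat {X : Type} (a : Rel X X) (eta : Cell (idrel X) a)
  (mu : Cell (rcomp a a) a) : Prop :=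
  vcomp mu (rwhisk eta a) = lunit a /\
  vcomp mu (lwhisk a eta) = runit a /\
  vcomp mu (vcomp (rwhisk mu a) (assocR a a a)) = vcomp mu (lwhisk a mu).

Definition isVFunctor {X Y : Type}
  (a : Rel X X) (eta_a : Cell (idrel X) a) (mu_a : Cell (rcomp a a) a)
  (b : Rel Y Y) (eta_b : Cell (idrel Y) b) (mu_b : Cell (rcomp b b) b)
  (f : X -> Y) (phi : Cell (rcomp (frel f) a) (rcomp b (frel f))) : Prop :=
  isVCat a eta_a mu_a /\ isVCat b eta_b mu_b /\
  vcomp phi (lwhisk (frel f) eta_a)
    = vcomp (rwhisk eta_b (frel f)) (vcomp (lunit_inv (frel f)) (runit (frel f))) /\
  vcomp phi (lwhisk (frel f) mu_a)
    = vcomp (rwhisk mu_b (frel f))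
      (vcomp (assocR b b (frel f))
      (vcomp (lwhisk b phi)
      (vcomp (assocL b (frel f) a)
      (vcomp (rwhisk phi a) (assocR (frel f) a a))))).

Definition isVNat {X Y : Type}
  (a : Rel X X) (eta_a : Cell (idrel X) a) (mu_a : Cell (rcomp a a) a)
  (b : Rel Y Y) (eta_b : Cell (idrel Y) b) (mu_b : Cell (rcomp b b) b)
  (f : X -> Y) (phi_f : Cell (rcomp (frel f) a) (rcomp b (frel f)))
  (g : X -> Y) (phi_g : Cell (rcomp (frel g) a) (rcomp b (frel g)))
  (zeta : Cell (rcomp (frel g) a) (rcomp b (frel f))) : Prop :=
  isVFunctor a eta_a mu_a b eta_b mu_b f phi_f /\
  isVFunctor a eta_a mu_a b eta_b mu_b g phi_g /\
  zeta = vcomp (rwhisk mu_b (frel f))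
         (vcomp (assocR b b (frel f))
         (vcomp (lwhisk b phi_f)
         (vcomp (assocL b (frel f) a)
         (vcomp (rwhisk zeta a)
         (vcomp (rwhisk (lwhisk (frel g) eta_a) a)
                (rwhisk (runit_inv (frel g)) a)))))) /\
  zeta = vcomp (rwhisk mu_b (frel f))
         (vcomp (assocR b b (frel f))
         (vcomp (lwhisk b zeta)
         (vcomp (lwhisk b (lwhisk (frel g) eta_a))
         (vcomp (lwhisk b (runit_inv (frel g))) phi_g)))).

End VRel.

Arguments idcell {V X Y} r.
Arguments vcomp {V X Y r r' r''} psi phi.
Arguments frel {V X Y} f.
Arguments idrel {V} X.
Arguments transp {V X Y} r.
Arguments rcomp {V X Y Z} s r.
Arguments hcomp {V X Y Z s s' r r'} psi phi.
Arguments lwhisk {V X Y Z} t {r r'} phi.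
Arguments rwhisk {V X Y Z s s'} psi r.
Arguments cellcast {V X Y r r'} e.
Arguments assocR {V W X Y Z} t s r.
Arguments assocL {V W X Y Z} t s r.
Arguments runit {V X Y} r.
Arguments runit_inv {V X Y} r.
Arguments lunit {V X Y} r.
Arguments lunit_inv {V X Y} r.
Arguments isVCat {V X} a eta mu.
Arguments isVFunctor {V X Y} a eta_a mu_a b eta_b mu_b f phi.
Arguments isVNat {V X Y} a eta_a mu_a b eta_b mu_b f phi_f g phi_g zeta.

Record SetMonad := {
  T : Type -> Type;
  Tmap : forall {X Y : Type}, (X -> Y) -> T X -> T Y;
  Tmap_id : forall X, Tmap (fun x : X => x) = (fun u => u);
  Tmap_comp : forall X Y Z (f : X -> Y) (g : Y -> Z),
      Tmap (fun x => g (f x)) = (fun u => Tmap g (Tmap f u));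
  e : forall {X : Type}, X -> T X;
  m : forall {X : Type}, T (T X) -> T X;
  e_nat : forall X Y (f : X -> Y) (x : X), Tmap f (e x) = e (f x);
  m_nat : forall X Y (f : X -> Y) (u : T (T X)), Tmap f (m u) = m (Tmap (Tmap f) u);
  m_e : forall X (u : T X), m (e u) = u;
  m_Te : forall X (u : T X), m (Tmap e u) = u;
  m_m : forall X (u : T (T (T X))), m (m u) = m (Tmap m u)
}.

Arguments T {M} X : rename.
Arguments Tmap {M X Y} f : rename.
Arguments Tmap_id M X : rename.

(* Lax extension of the Set-functor T to V-Rel: the lax functor part.  *)
(*  are not used by the statement and are omitted, which only makes    *)
(*  the theorem more general.)                                         *)
Record LaxExt (V : SMCC) (M : SetMonad) := {
  Trel : forall {X Y : Type}, Rel V X Y -> Rel V (@T M X) (@T M Y);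
  Tcell : forall {X Y : Type} {r r' : Rel V X Y}, Cell V r r' -> Cell V (Trel r) (Trel r');
  Tcell_id : forall X Y (r : Rel V X Y), Tcell (idcell r) = idcell (Trel r);
  Tcell_comp : forall X Y (r r' r'' : Rel V X Y) (psi : Cell V r' r'') (phi : Cell V r r'),
      Tcell (vcomp psi phi) = vcomp (Tcell psi) (Tcell phi);
  Trel_fun : forall X Y (f : X -> Y), Trel (frel f) = frel (Tmap f);
  Trel_transp : forall X Y (f : X -> Y), Trel (transp (frel f)) = transp (frel (Tmap f));
  kappa : forall {X Y Z : Type} (s : Rel V Y Z) (r : Rel V X Y),
      Cell V (rcomp (Trel s) (Trel r)) (Trel (rcomp s r));
  kappa_nat : forall X Y Z (s s' : Rel V Y Z) (r r' : Rel V X Y)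
      (psi : Cell V s s') (phi : Cell V r r'),
      vcomp (kappa s' r') (hcomp (Tcell psi) (Tcell phi))
      = vcomp (Tcell (hcomp psi phi)) (kappa s r);
  kappa_assoc : forall W X Y Z (t : Rel V Y Z) (s : Rel V X Y) (r : Rel V W X),
      vcomp (Tcell (assocR t s r))
        (vcomp (kappa t (rcomp s r)) (lwhisk (Trel t) (kappa s r)))
      = vcomp (kappa (rcomp t s) r)
        (vcomp (rwhisk (kappa t s) (Trel r)) (assocR (Trel t) (Trel s) (Trel r)));
  kappa_r1 : forall X Y (r : Rel V X Y),
      vcomp (Tcell (runit r)) (kappa r (idrel X))
      = vcomp (runit (Trel r))
          (lwhisk (Trel r) (cellcast (eq_trans (Trel_fun X X (fun x => x))
                                               (f_equal frel (Tmap_id M X)))));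
  kappa_1r : forall X Y (r : Rel V X Y),
      vcomp (Tcell (lunit r)) (kappa (idrel Y) r)
      = vcomp (lunit (Trel r))
          (rwhisk (cellcast (eq_trans (Trel_fun Y Y (fun y => y))
                                      (f_equal frel (Tmap_id M Y)))) (Trel r))
}.

Arguments Trel {V M} L {X Y} r : rename.
Arguments Tcell {V M} L {X Y r r'} phi : rename.
Arguments Trel_fun {V M} L X Y f : rename.
Arguments kappa {V M} L {X Y Z} s r : rename.

Definition T1eq {V : SMCC} {M : SetMonad} (L : LaxExt V M) (X : Type)
  : Trel L (idrel X) = idrel (@T M X) :=
  eq_trans (Trel_fun L X X (fun x => x)) (f_equal frel (Tmap_id M X)).

Definition Teta {V : SMCC} {M : SetMonad} (L : LaxExt V M) {X : Type} {a : Rel V X X}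
  (eta : Cell V (idrel X) a) : Cell V (idrel (@T M X)) (Trel L a) :=
  vcomp (Tcell L eta) (cellcast (eq_sym (T1eq L X))).

Definition Tmu {V : SMCC} {M : SetMonad} (L : LaxExt V M) {X : Type} {a : Rel V X X}
  (mu : Cell V (rcomp a a) a) : Cell V (rcomp (Trel L a) (Trel L a)) (Trel L a) :=
  vcomp (Tcell L mu) (kappa L a a).

(* kinv . T phi . kappa_{f,a}, read as a 2-cell (Tf)(Ta) -> (Tb)(Tf) where
   Tf is the V-relation of the function Tmap f; kinv is meant to be the
   inverse of kappa_{b,f}. *)
Definition Tconj {V : SMCC} {M : SetMonad} (L : LaxExt V M) {X Y : Type}
  {a : Rel V X X} {b : Rel V Y Y} (f g : X -> Y)
  (kinv : Cell V (Trel L (rcomp b (frel f))) (rcomp (Trel L b) (Trel L (frel f))))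
  (phi : Cell V (rcomp (frel g) a) (rcomp b (frel f)))
  : Cell V (rcomp (frel (Tmap g)) (Trel L a)) (rcomp (Trel L b) (frel (Tmap f))) :=
  vcomp (lwhisk (Trel L b) (cellcast (Trel_fun L X Y f)))
  (vcomp kinv
  (vcomp (Tcell L phi)
  (vcomp (kappa L (frel g) a)
         (rwhisk (cellcast (eq_sym (Trel_fun L X Y g))) (Trel L a))))).

(* Main.v *)
Require Import Defs.
From Stdlib Require Import FunctionalExtensionality ProofIrrelevance ClassicalEpsilon.

Section Basic.
Context {V : SMCC}.

Lemma curry_inj (A B C : ob V) (h k : hom V (ten A B) C) : curry h = curry k -> h = k.
Proof. intro H. rewrite <- (uncurry_curry V _ _ _ h), <- (uncurry_curry V _ _ _ k), H. reflexivity. Qed.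

Lemma uncurry_nat (A A' B C : ob V) (h : hom V A (ihom B C)) (g : hom V A' A) :
  uncurry (cmp h g) = cmp (uncurry h) (tmap g (idm B)).
Proof.
  apply curry_inj. rewrite curry_uncurry, curry_nat, curry_uncurry. reflexivity.
Qed.

Lemma sum_ext J (F : J -> ob V) C (h k : hom V (Sum J F) C) :
  (forall j, cmp h (inj F j) = cmp k (inj F j)) -> h = k.
Proof.
  intro H. rewrite (copair_uniq V J F C (fun j => cmp k (inj F j)) h H).
  symmetry. apply copair_uniq. reflexivity.
Qed.

Lemma tensum_ext J (F : J -> ob V) B C (h k : hom V (ten (Sum J F) B) C) :
  (forall j, cmp h (tmap (inj F j) (idm B)) = cmp k (tmap (inj F j) (idm B))) -> h = k.
Proof.
  intro H. apply curry_inj. apply sum_ext. intro j.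
  rewrite <- !curry_nat. rewrite H. reflexivity.
Qed.

Lemma cmp_sym_cancel (A B C : ob V) (h k : hom V (ten A B) C) :
  cmp h (sym B A) = cmp k (sym B A) -> h = k.
Proof.
  intro H. rewrite <- (cmp_id_r V _ _ h), <- (cmp_id_r V _ _ k).
  rewrite <- (sym_invol V A B), !cmp_assoc, H. reflexivity.
Qed.

Lemma sumten_ext J (F : J -> ob V) A C (h k : hom V (ten A (Sum J F)) C) :
  (forall j, cmp h (tmap (idm A) (inj F j)) = cmp k (tmap (idm A) (inj F j))) -> h = k.
Proof.
  intro H. apply cmp_sym_cancel. apply tensum_ext. intro j.
  rewrite <- !cmp_assoc, !sym_nat, !cmp_assoc, H. reflexivity.
Qed.

Lemma distR_inj J (F : J -> ob V) B C G j :
  cmp (distR V F B C G) (tmap (inj F j) (idm B)) = G j.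
Proof.
  unfold distR. rewrite <- uncurry_nat, copair_inj, uncurry_curry. reflexivity.
Qed.

Lemma distL_inj A J (F : J -> ob V) C G j :
  cmp (distL V A F C G) (tmap (idm A) (inj F j)) = G j.
Proof.
  unfold distL. rewrite <- cmp_assoc, sym_nat, cmp_assoc, distR_inj.
  rewrite <- cmp_assoc, sym_invol, cmp_id_r. reflexivity.
Qed.

Lemma botten_uniq (A C : ob V) (h k : hom V (ten (@bot V) A) C) : h = k.
Proof.
  apply curry_inj. rewrite (bot_uniq V _ (curry h)), (bot_uniq V _ (curry k)). reflexivity.
Qed.

Lemma tenbot_uniq (A C : ob V) (h k : hom V (ten A (@bot V)) C) : h = k.
Proof. apply cmp_sym_cancel. apply botten_uniq. Qed.

End Basic.

Ltac cinj := match goal with |- context [cmp (copair ?G) (inj ?F ?j)] =>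
   erewrite (copair_inj _ _ F) end.

Section Rel.
Context {V : SMCC}.

Lemma cell_ext {X Y} {r r' : Rel V X Y} (p q : Cell V r r') :
  (forall x y, p x y = q x y) -> p = q.
Proof. intro H. apply functional_extensionality_dep; intro x.
  apply functional_extensionality_dep; intro y. apply H. Qed.

Lemma vcomp_assoc {X Y} {r1 r2 r3 r4 : Rel V X Y} (p : Cell V r3 r4) (q : Cell V r2 r3)
  (s : Cell V r1 r2) : vcomp (vcomp p q) s = vcomp p (vcomp q s).
Proof. apply cell_ext; intros; unfold vcomp; rewrite cmp_assoc; reflexivity. Qed.

Lemma vcomp_id_l {X Y} {r r' : Rel V X Y} (p : Cell V r r') : vcomp (idcell r') p = p.
Proof. apply cell_ext; intros; unfold vcomp, idcell; apply cmp_id_l. Qed.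

Lemma vcomp_id_r {X Y} {r r' : Rel V X Y} (p : Cell V r r') : vcomp p (idcell r) = p.
Proof. apply cell_ext; intros; unfold vcomp, idcell; apply cmp_id_r. Qed.

Lemma hcomp_id {X Y Z} (s : Rel V Y Z) (r : Rel V X Y) :
  hcomp (idcell s) (idcell r) = idcell (rcomp s r).
Proof.
  apply cell_ext; intros x z. unfold hcomp, idcell. symmetry. apply copair_uniq.
  intro y. rewrite tmap_id, cmp_id_l, cmp_id_r. reflexivity.
Qed.

Lemma interchange {X Y Z} {s s' s'' : Rel V Y Z} {r r' r'' : Rel V X Y}
  (psi' : Cell V s' s'') (psi : Cell V s s') (phi' : Cell V r' r'') (phi : Cell V r r') :
  vcomp (hcomp psi' phi') (hcomp psi phi) = hcomp (vcomp psi' psi) (vcomp phi' phi).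
Proof.
  apply cell_ext; intros x z. unfold hcomp, vcomp. apply copair_uniq. intro y.
  rewrite <- cmp_assoc. cinj. rewrite cmp_assoc. cinj. rewrite <- cmp_assoc, <- tmap_cmp.
  reflexivity.
Qed.

Lemma lwhisk_id {X Y Z} (t : Rel V Y Z) (r : Rel V X Y) :
  lwhisk t (idcell r) = idcell _.
Proof. apply hcomp_id. Qed.
Lemma rwhisk_id {X Y Z} (t : Rel V Y Z) (r : Rel V X Y) :
  rwhisk (idcell t) r = idcell _.
Proof. apply hcomp_id. Qed.

Lemma lwhisk_comp {X Y Z} (t : Rel V Y Z) {r r' r'' : Rel V X Y}
  (p : Cell V r' r'') (q : Cell V r r') :
  vcomp (lwhisk t p) (lwhisk t q) = lwhisk t (vcomp p q).
Proof. unfold lwhisk. rewrite interchange, vcomp_id_l. reflexivity. Qed.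
Lemma rwhisk_comp {X Y Z} {t t' t'' : Rel V Y Z} (r : Rel V X Y)
  (p : Cell V t' t'') (q : Cell V t t') :
  vcomp (rwhisk p r) (rwhisk q r) = rwhisk (vcomp p q) r.
Proof. unfold rwhisk. rewrite interchange, vcomp_id_l. reflexivity. Qed.

Lemma hcomp_lr {X Y Z} {s s' : Rel V Y Z} {r r' : Rel V X Y}
  (psi : Cell V s s') (phi : Cell V r r') :
  hcomp psi phi = vcomp (rwhisk psi r') (lwhisk s phi).
Proof. unfold rwhisk, lwhisk. rewrite interchange, vcomp_id_l, vcomp_id_r. reflexivity. Qed.
Lemma hcomp_rl {X Y Z} {s s' : Rel V Y Z} {r r' : Rel V X Y}
  (psi : Cell V s s') (phi : Cell V r r') :
  hcomp psi phi = vcomp (lwhisk s' phi) (rwhisk psi r).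
Proof. unfold rwhisk, lwhisk. rewrite interchange, vcomp_id_l, vcomp_id_r. reflexivity. Qed.

Lemma cast_inv1 {X Y} {r r' : Rel V X Y} (e : r = r') :
  vcomp (cellcast e) (cellcast (eq_sym e)) = idcell _.
Proof. destruct e. apply vcomp_id_l. Qed.
Lemma cast_inv2 {X Y} {r r' : Rel V X Y} (e : r = r') :
  vcomp (cellcast (eq_sym e)) (cellcast e) = idcell _.
Proof. destruct e. apply vcomp_id_l. Qed.

End Rel.

Section S2. Context {V : SMCC}.
Definition Ud {P : Prop} (d : {P}+{~P}) : ob V := if d then @unit V else @bot V.

Definition lunitG {Y} (R : Y -> ob V) (y y' : Y) (d : {y'=y}+{y'<>y})
  : hom V (ten (R y') (Ud d)) (R y) :=
  match d as d return hom V (ten (R y') (if d then @unit V else @bot V)) (R y) with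
    | left e => cmp (match e in _ = y0 return hom V (R y') (R y0) with
                     | eq_refl => idm (R y') end) (ru (R y'))
    | right _ => cmp (botten V (R y') (R y)) (sym (R y') (@bot V))
    end.
Definition lunitI {Y} (A : ob V) (y : Y) (d : {y=y}+{y<>y}) : hom V A (ten A (Ud d)) :=
  match d as d return hom V A (ten A (if d then @unit V else @bot V)) with
     | left _ => ru_inv A
     | right n => False_rect _ (n eq_refl)
     end.

Lemma lunit_eq {X Y} (r : Rel V X Y) x y :
  lunit r x y = copair (fun y' => lunitG (r x) y y' (excluded_middle_informative (y' = y))).
Proof. reflexivity. Qed.
Lemma lunit_inv_eq {X Y} (r : Rel V X Y) x y :
  lunit_inv r x y = cmp (inj (fun y' => ten (r x y') (idrel Y y' y)) y)
                        (lunitI (r x y) y (excluded_middle_informative (y = y))).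
Proof. reflexivity. Qed.

Lemma gen_bot {Y} (A C : ob V) (y y' : Y) (d : {y'=y}+{y'<>y}) (n : y' <> y)
  (f g : hom V (ten A (Ud d)) C) : f = g.
Proof. destruct d; [contradiction|]. apply tenbot_uniq. Qed.

Lemma gen_l1 {Y} (R : Y -> ob V) (y : Y) S (d : {y=y}+{y<>y}) (i : hom V (ten (R y) (Ud d)) S) :
  cmp (cmp i (lunitI (R y) y d)) (lunitG R y y d) = i.
Proof.
  destruct d as [e|n]; [|contradiction]. rewrite (proof_irrelevance _ e eq_refl).
  simpl. rewrite cmp_id_l, <- cmp_assoc, ru_iso1, cmp_id_r. reflexivity.
Qed.

Lemma gen_l2 {Y} (R : Y -> ob V) (y : Y) (d : {y=y}+{y<>y}) :
  cmp (lunitG R y y d) (lunitI (R y) y d) = idm _.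
Proof.
  destruct d as [e|n]; [|contradiction]. rewrite (proof_irrelevance _ e eq_refl).
  simpl. rewrite cmp_id_l, ru_iso2. reflexivity.
Qed.

Lemma lunit_inv_l {X Y} (r : Rel V X Y) : vcomp (lunit_inv r) (lunit r) = idcell _.
Proof.
  apply cell_ext; intros x y. unfold vcomp, idcell. rewrite lunit_eq, lunit_inv_eq.
  apply sum_ext; intro y'. rewrite cmp_id_l, <- cmp_assoc. cinj.
  assert (Hd := excluded_middle_informative (y' = y)); destruct Hd as [e|n].
  - subst y'. apply (gen_l1 (r x) y).
  - apply (gen_bot _ _ y y' (excluded_middle_informative (y' = y)) n).
Qed.

Lemma lunit_inv_r {X Y} (r : Rel V X Y) : vcomp (lunit r) (lunit_inv r) = idcell _.
Proof.
  apply cell_ext; intros x y. unfold vcomp, idcell. rewrite lunit_eq, lunit_inv_eq.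
  rewrite cmp_assoc. cinj. apply (gen_l2 (r x) y).
Qed.

Definition runitG {X} (R : X -> ob V) (x x' : X) (d : {x=x'}+{x<>x'})
  : hom V (ten (Ud d) (R x')) (R x) :=
  match d as d return hom V (ten (if d then @unit V else @bot V) (R x')) (R x) with
    | left e => cmp (match e in _ = x0 return hom V (R x0) (R x) with
                     | eq_refl => idm (R x) end) (lu (R x'))
    | right _ => botten V (R x') (R x)
    end.
Definition runitI {X} (A : ob V) (x : X) (d : {x=x}+{x<>x}) : hom V A (ten (Ud d) A) :=
  match d as d return hom V A (ten (if d then @unit V else @bot V) A) with
     | left _ => lu_inv A
     | right n => False_rect _ (n eq_refl)
     end.

Lemma runit_eq {X Y} (r : Rel V X Y) x y :
  runit r x y = copair (fun x' => runitG (fun x' => r x' y) x x' (excluded_middle_informative (x = x'))).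
Proof. reflexivity. Qed.
Lemma runit_inv_eq {X Y} (r : Rel V X Y) x y :
  runit_inv r x y = cmp (inj (fun x' => ten (idrel X x x') (r x' y)) x)
                        (runitI (r x y) x (excluded_middle_informative (x = x))).
Proof. reflexivity. Qed.

Lemma gen_bot2 {X} (A C : ob V) (x x' : X) (d : {x=x'}+{x<>x'}) (n : x <> x')
  (f g : hom V (ten (Ud d) A) C) : f = g.
Proof. destruct d; [contradiction|]. apply botten_uniq. Qed.

Lemma gen_r1 {X} (R : X -> ob V) (x : X) S (d : {x=x}+{x<>x}) (i : hom V (ten (Ud d) (R x)) S) :
  cmp (cmp i (runitI (R x) x d)) (runitG R x x d) = i.
Proof.
  destruct d as [e|n]; [|contradiction]. rewrite (proof_irrelevance _ e eq_refl).
  simpl. rewrite cmp_id_l, <- cmp_assoc, lu_iso1, cmp_id_r. reflexivity.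
Qed.

Lemma gen_r2 {X} (R : X -> ob V) (x : X) (d : {x=x}+{x<>x}) :
  cmp (runitG R x x d) (runitI (R x) x d) = idm _.
Proof.
  destruct d as [e|n]; [|contradiction]. rewrite (proof_irrelevance _ e eq_refl).
  simpl. rewrite cmp_id_l, lu_iso2. reflexivity.
Qed.

Lemma runit_inv_l {X Y} (r : Rel V X Y) : vcomp (runit_inv r) (runit r) = idcell _.
Proof.
  apply cell_ext; intros x y. unfold vcomp, idcell. rewrite runit_eq, runit_inv_eq.
  apply sum_ext; intro x'. rewrite cmp_id_l, <- cmp_assoc. cinj.
  assert (Hd := excluded_middle_informative (x = x')); destruct Hd as [e|n].
  - subst x'. apply (gen_r1 (fun x' => r x' y) x).
  - apply (gen_bot2 _ _ x x' (excluded_middle_informative (x = x')) n).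
Qed.

Lemma runit_inv_r {X Y} (r : Rel V X Y) : vcomp (runit r) (runit_inv r) = idcell _.
Proof.
  apply cell_ext; intros x y. unfold vcomp, idcell. rewrite runit_eq, runit_inv_eq.
  rewrite cmp_assoc. cinj. apply (gen_r2 (fun x' => r x' y) x).
Qed.
End S2.

Section S3a. Context {V : SMCC}.
Lemma copair_inj2 J (F : J -> ob V) C (G : forall j, hom V (F j) C) j A (k : hom V A (F j)) :
  cmp (copair G) (cmp (inj F j) k) = cmp (G j) k.
Proof. rewrite cmp_assoc, copair_inj. reflexivity. Qed.
Lemma distR_inj2 J (F : J -> ob V) B C G j A (k : hom V A (ten (F j) B)) :
  cmp (distR V F B C G) (cmp (tmap (inj F j) (idm B)) k) = cmp (G j) k.
Proof. rewrite cmp_assoc, distR_inj. reflexivity. Qed.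
Lemma distL_inj2 A0 J (F : J -> ob V) C G j A (k : hom V A (ten A0 (F j))) :
  cmp (distL V A0 F C G) (cmp (tmap (idm A0) (inj F j)) k) = cmp (G j) k.
Proof. rewrite cmp_assoc, distL_inj. reflexivity. Qed.
End S3a.

Ltac cinj2 := match goal with |- context [cmp (copair ?G) (cmp (inj ?F ?j) _)] =>
   erewrite (copair_inj2 _ F) end.
Ltac dRinj := match goal with |- context [cmp (distR _ ?F ?B ?C ?G) (tmap (inj ?F' ?j) (idm ?B'))] =>
   erewrite (distR_inj _ F) end.
Ltac dLinj := match goal with |- context [cmp (distL _ ?A ?F ?C ?G) (tmap (idm ?A') (inj ?F' ?j))] =>
   erewrite (distL_inj _ _ F) end.
Ltac dRinj2 := match goal with |- context [cmp (distR _ ?F ?B ?C ?G) (cmp (tmap (inj ?F' ?j) (idm ?B')) _)] =>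
   erewrite (distR_inj2 _ F) end.
Ltac dLinj2 := match goal with |- context [cmp (distL _ ?A ?F ?C ?G) (cmp (tmap (idm ?A') (inj ?F' ?j)) _)] =>
   erewrite (distL_inj2 _ _ F) end.
Ltac cnorm := repeat rewrite <- cmp_assoc.
Ltac csimp := cnorm; repeat (first [cinj2 | dRinj2 | dLinj2 | cinj | dRinj | dLinj]; cnorm).

Section S3. Context {V : SMCC}.
Lemma assoc_inv1 {W X Y Z} (t : Rel V Y Z) (s : Rel V X Y) (r : Rel V W X) :
  vcomp (assocL t s r) (assocR t s r) = idcell _.
Proof.
  apply cell_ext; intros w z. unfold vcomp, idcell, assocL, assocR.
  apply sum_ext; intro y. apply tensum_ext; intro x.
  rewrite cmp_id_l. csimp. rewrite asc_iso1, cmp_id_r. reflexivity.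
Qed.
Lemma assoc_inv2 {W X Y Z} (t : Rel V Y Z) (s : Rel V X Y) (r : Rel V W X) :
  vcomp (assocR t s r) (assocL t s r) = idcell _.
Proof.
  apply cell_ext; intros w z. unfold vcomp, idcell, assocL, assocR.
  apply sum_ext; intro x. apply sumten_ext; intro y.
  rewrite cmp_id_l. csimp. rewrite asc_iso2, cmp_id_r. reflexivity.
Qed.
End S3.

Lemma vrw2 {V : SMCC} {X Y} {r1 r2 r3 : Rel V X Y} (A : Cell V r2 r3) (B : Cell V r1 r2)
  (C : Cell V r1 r3) (H : vcomp A B = C) {r0} (rest : Cell V r0 r1) :
  vcomp A (vcomp B rest) = vcomp C rest.
Proof. rewrite <- H, vcomp_assoc. reflexivity. Qed.

Lemma vrw3 {V : SMCC} {X Y} {r1 r2 r3 r4 : Rel V X Y} (A : Cell V r3 r4) (B : Cell V r2 r3)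
  (B2 : Cell V r1 r2) (C : Cell V r1 r4) (H : vcomp A (vcomp B B2) = C) {r0} (rest : Cell V r0 r1) :
  vcomp A (vcomp B (vcomp B2 rest)) = vcomp C rest.
Proof. rewrite <- H, !vcomp_assoc. reflexivity. Qed.

Ltac vnorm := repeat rewrite vcomp_assoc.
Ltac vrw H := first [rewrite H | rewrite (vrw2 _ _ _ H) | rewrite (vrw3 _ _ _ _ H)]; vnorm.
Ltac vrwb H := first [rewrite <- H | rewrite (vrw2 _ _ _ (eq_sym H)) | rewrite (vrw3 _ _ _ _ (eq_sym H))]; vnorm.

Section Lax.
Variables (V : SMCC) (M : SetMonad) (L : LaxExt V M).

Lemma Tid {X Y} (r : Rel V X Y) : Tcell L (idcell r) = idcell _.
Proof. apply Tcell_id. Qed.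
Lemma Tcomp {X Y} {r r' r'' : Rel V X Y} (p : Cell V r' r'') (q : Cell V r r') :
  vcomp (Tcell L p) (Tcell L q) = Tcell L (vcomp p q).
Proof. symmetry; apply Tcell_comp. Qed.

Lemma kn_l {X Y Z} (t : Rel V Y Z) {r r' : Rel V X Y} (phi : Cell V r r') :
  vcomp (kappa L t r') (lwhisk (Trel L t) (Tcell L phi)) = vcomp (Tcell L (lwhisk t phi)) (kappa L t r).
Proof. unfold lwhisk. rewrite <- Tid. apply kappa_nat. Qed.
Lemma kn_r {X Y Z} {t t' : Rel V Y Z} (psi : Cell V t t') (r : Rel V X Y) :
  vcomp (kappa L t' r) (rwhisk (Tcell L psi) (Trel L r)) = vcomp (Tcell L (rwhisk psi r)) (kappa L t r).
Proof. unfold rwhisk. rewrite <- Tid. apply kappa_nat. Qed.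

Lemma k1r {X Y} (r : Rel V X Y) :
  vcomp (Tcell L (runit r)) (kappa L r (idrel X))
  = vcomp (runit (Trel L r)) (lwhisk (Trel L r) (cellcast (T1eq L X))).
Proof. exact (kappa_r1 V M L X Y r). Qed.
Lemma k1l {X Y} (r : Rel V X Y) :
  vcomp (Tcell L (lunit r)) (kappa L (idrel Y) r)
  = vcomp (lunit (Trel L r)) (rwhisk (cellcast (T1eq L Y)) (Trel L r)).
Proof. exact (kappa_1r V M L X Y r). Qed.

Lemma Tlunit_inv {X Y} (r : Rel V X Y) :
  Tcell L (lunit_inv r) = vcomp (kappa L (idrel Y) r)
     (vcomp (rwhisk (cellcast (eq_sym (T1eq L Y))) (Trel L r)) (lunit_inv (Trel L r))).
Proof.
  assert (E : vcomp (lunit (Trel L r)) (vcomp (rwhisk (cellcast (T1eq L Y)) (Trel L r))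
     (vcomp (rwhisk (cellcast (eq_sym (T1eq L Y))) (Trel L r)) (lunit_inv (Trel L r)))) = idcell _).
  { rewrite <- (vcomp_assoc (rwhisk _ _)), rwhisk_comp, cast_inv1, rwhisk_id, vcomp_id_l.
    apply lunit_inv_r. }
  rewrite <- (vcomp_id_r (Tcell L (lunit_inv r))), <- E.
  vrwb (k1l r). vrw (Tcomp (lunit_inv r) (lunit r)). rewrite lunit_inv_l, Tid, vcomp_id_l. reflexivity.
Qed.

Lemma Trunit_inv {X Y} (r : Rel V X Y) :
  Tcell L (runit_inv r) = vcomp (kappa L r (idrel X))
     (vcomp (lwhisk (Trel L r) (cellcast (eq_sym (T1eq L X)))) (runit_inv (Trel L r))).
Proof.
  assert (E : vcomp (runit (Trel L r)) (vcomp (lwhisk (Trel L r) (cellcast (T1eq L X)))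
     (vcomp (lwhisk (Trel L r) (cellcast (eq_sym (T1eq L X)))) (runit_inv (Trel L r)))) = idcell _).
  { rewrite <- (vcomp_assoc (lwhisk _ _)), lwhisk_comp, cast_inv1, lwhisk_id, vcomp_id_l.
    apply runit_inv_r. }
  rewrite <- (vcomp_id_r (Tcell L (runit_inv r))), <- E.
  vrwb (k1r r). vrw (Tcomp (runit_inv r) (runit r)). rewrite runit_inv_l, Tid, vcomp_id_l. reflexivity.
Qed.

Lemma kassoc {W X Y Z} (t : Rel V Y Z) (s : Rel V X Y) (r : Rel V W X) :
  vcomp (Tcell L (assocR t s r)) (vcomp (kappa L t (rcomp s r)) (lwhisk (Trel L t) (kappa L s r)))
  = vcomp (kappa L (rcomp t s) r)
      (vcomp (rwhisk (kappa L t s) (Trel L r)) (assocR (Trel L t) (Trel L s) (Trel L r))).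
Proof. apply kappa_assoc. Qed.

Lemma TaL {W X Y Z} (t : Rel V Y Z) (s : Rel V X Y) (r : Rel V W X)
  (kinv : Cell V (Trel L (rcomp t s)) (rcomp (Trel L t) (Trel L s)))
  (Hk2 : vcomp (kappa L t s) kinv = idcell _) :
  vcomp (Tcell L (assocL t s r)) (kappa L (rcomp t s) r)
  = vcomp (kappa L t (rcomp s r)) (vcomp (lwhisk (Trel L t) (kappa L s r))
      (vcomp (assocL (Trel L t) (Trel L s) (Trel L r)) (rwhisk kinv (Trel L r)))).
Proof.
  set (RHS := vcomp (kappa L t (rcomp s r)) _).
  assert (E : kappa L (rcomp t s) r = vcomp (Tcell L (assocR t s r)) RHS).
  { unfold RHS. vrw (kassoc t s r). vrw (assoc_inv2 (Trel L t) (Trel L s) (Trel L r)).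
    rewrite vcomp_id_l, rwhisk_comp, Hk2, rwhisk_id, vcomp_id_r. reflexivity. }
  rewrite E. vrw (Tcomp (assocL t s r) (assocR t s r)). rewrite assoc_inv1, Tid, vcomp_id_l.
  reflexivity.
Qed.

Lemma TaR {W X Y Z} (t : Rel V Y Z) (s : Rel V X Y) (r : Rel V W X)
  (kinv : Cell V (Trel L (rcomp s r)) (rcomp (Trel L s) (Trel L r)))
  (Hk2 : vcomp (kappa L s r) kinv = idcell _) :
  vcomp (Tcell L (assocR t s r)) (kappa L t (rcomp s r))
  = vcomp (kappa L (rcomp t s) r) (vcomp (rwhisk (kappa L t s) (Trel L r))
      (vcomp (assocR (Trel L t) (Trel L s) (Trel L r)) (lwhisk (Trel L t) kinv))).
Proof.
  transitivity (vcomp (Tcell L (assocR t s r)) (vcomp (kappa L t (rcomp s r))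
     (lwhisk (Trel L t) (vcomp (kappa L s r) kinv)))).
  { rewrite Hk2, lwhisk_id, vcomp_id_r. reflexivity. }
  rewrite <- lwhisk_comp. vnorm. vrw (kassoc t s r). reflexivity.
Qed.

Lemma part1 {X} (a : Rel V X X) (eta : Cell V (idrel X) a) (mu : Cell V (rcomp a a) a) :
  isVCat a eta mu -> isVCat (Trel L a) (Teta L eta) (Tmu L mu).
Proof.
  intros [H1 [H2 H3]]. unfold Teta, Tmu. split; [|split].
  - rewrite <- rwhisk_comp. vnorm. vrw (kn_r eta a). vrw (Tcomp mu (rwhisk eta a)).
    rewrite H1. vrw (k1l a). rewrite rwhisk_comp, cast_inv1, rwhisk_id, vcomp_id_r. reflexivity.
  - rewrite <- lwhisk_comp. vnorm. vrw (kn_l a eta). vrw (Tcomp mu (lwhisk a eta)).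
    rewrite H2. vrw (k1r a). rewrite lwhisk_comp, cast_inv1, lwhisk_id, vcomp_id_r. reflexivity.
  - rewrite <- rwhisk_comp, <- lwhisk_comp. vnorm. vrw (kn_r mu a).
    vrw (Tcomp mu (rwhisk mu a)). vrwb (kassoc a a a).
    vrw (Tcomp (vcomp mu (rwhisk mu a)) (assocR a a a)). rewrite H3.
    rewrite <- (Tcomp mu (lwhisk a mu)). vnorm. vrwb (kn_l a mu). reflexivity.
Qed.

Lemma Tsplit {X Y} {r r' r'' : Rel V X Y} (p : Cell V r' r'') (q : Cell V r r') :
  Tcell L (vcomp p q) = vcomp (Tcell L p) (Tcell L q).
Proof. apply Tcell_comp. Qed.

Lemma coreU {X Y} (a : Rel V X X) (eta_a : Cell V (idrel X) a)
  (b : Rel V Y Y) (eta_b : Cell V (idrel Y) b)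
  (f : X -> Y) (phi : Cell V (rcomp (frel f) a) (rcomp b (frel f)))
  (Hu : vcomp phi (lwhisk (frel f) eta_a)
    = vcomp (rwhisk eta_b (frel f)) (vcomp (lunit_inv (frel f)) (runit (frel f))))
  (kinv : Cell V (Trel L (rcomp b (frel f))) (rcomp (Trel L b) (Trel L (frel f))))
  (Hk1 : vcomp kinv (kappa L b (frel f)) = idcell _) :
  vcomp kinv (vcomp (Tcell L phi) (vcomp (kappa L (frel f) a)
     (lwhisk (Trel L (frel f)) (Teta L eta_a))))
  = vcomp (rwhisk (Teta L eta_b) (Trel L (frel f)))
      (vcomp (lunit_inv (Trel L (frel f))) (runit (Trel L (frel f)))).
Proof.
  unfold Teta. rewrite <- lwhisk_comp, <- rwhisk_comp. vnorm.
  vrw (kn_l (frel f) eta_a). vrw (Tcomp phi (lwhisk (frel f) eta_a)). rewrite Hu.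
  rewrite !Tsplit. vnorm. vrw (k1r (frel f)).
  rewrite lwhisk_comp, cast_inv1, lwhisk_id, vcomp_id_r.
  rewrite Tlunit_inv. vnorm. vrwb (kn_r eta_b (frel f)). vrw Hk1. rewrite vcomp_id_l.
  reflexivity.
Qed.

Lemma coreM {X Y} (a : Rel V X X) (mu_a : Cell V (rcomp a a) a)
  (b : Rel V Y Y) (mu_b : Cell V (rcomp b b) b)
  (f : X -> Y) (phi : Cell V (rcomp (frel f) a) (rcomp b (frel f)))
  (Hm : vcomp phi (lwhisk (frel f) mu_a)
    = vcomp (rwhisk mu_b (frel f))
      (vcomp (assocR b b (frel f))
      (vcomp (lwhisk b phi)
      (vcomp (assocL b (frel f) a)
      (vcomp (rwhisk phi a) (assocR (frel f) a a))))))
  (kinv : Cell V (Trel L (rcomp b (frel f))) (rcomp (Trel L b) (Trel L (frel f))))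
  (Hk1 : vcomp kinv (kappa L b (frel f)) = idcell _)
  (Hk2 : vcomp (kappa L b (frel f)) kinv = idcell _) :
  let Tf := Trel L (frel f) in let Ta := Trel L a in let Tb := Trel L b in
  let Psi := vcomp kinv (vcomp (Tcell L phi) (kappa L (frel f) a)) in
  vcomp Psi (lwhisk Tf (Tmu L mu_a))
  = vcomp (rwhisk (Tmu L mu_b) Tf)
      (vcomp (assocR Tb Tb Tf)
      (vcomp (lwhisk Tb Psi)
      (vcomp (assocL Tb Tf Ta)
      (vcomp (rwhisk Psi Ta) (assocR Tf Ta Ta))))).
Proof.
  intros Tf Ta Tb Psi. unfold Psi, Tmu, Tf, Ta, Tb.
  rewrite <- !lwhisk_comp, <- !rwhisk_comp. vnorm.
  vrw (kn_l (frel f) mu_a). vrw (Tcomp phi (lwhisk (frel f) mu_a)). rewrite Hm.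
  rewrite !Tsplit. vnorm.
  vrw (kassoc (frel f) a a). vrwb (kn_r phi a).
  vrw (TaL b (frel f) a kinv Hk2). vrwb (kn_l b phi).
  vrw (TaR b b (frel f) kinv Hk2). vrwb (kn_r mu_b (frel f)).
  vrw Hk1. rewrite vcomp_id_l. reflexivity.
Qed.

Lemma castU {A B : Type} (Ta : Rel V A A) (Tb : Rel V B B) (R R' : Rel V A B) (e : R = R')
  (Aeta : Cell V (idrel A) Ta) (Beta : Cell V (idrel B) Tb) {Q1 Q2 : Rel V A B}
  (P1 : Cell V Q2 (rcomp Tb R)) (P2 : Cell V Q1 Q2) (P3 : Cell V (rcomp R Ta) Q1) :
  vcomp P1 (vcomp P2 (vcomp P3 (lwhisk R Aeta)))
    = vcomp (rwhisk Beta R) (vcomp (lunit_inv R) (runit R)) ->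
  vcomp (vcomp (lwhisk Tb (cellcast e)) (vcomp P1 (vcomp P2 (vcomp P3 (rwhisk (cellcast (eq_sym e)) Ta)))))
        (lwhisk R' Aeta)
    = vcomp (rwhisk Beta R') (vcomp (lunit_inv R') (runit R')).
Proof.
  destruct e. simpl. rewrite lwhisk_id, rwhisk_id, vcomp_id_l, vcomp_id_r. vnorm. auto.
Qed.

Lemma castM {A B : Type} (Ta : Rel V A A) (Tb : Rel V B B) (R R' : Rel V A B) (e : R = R')
  (Amu : Cell V (rcomp Ta Ta) Ta) (Bmu : Cell V (rcomp Tb Tb) Tb) {Q1 Q2 : Rel V A B}
  (P1 : Cell V Q2 (rcomp Tb R)) (P2 : Cell V Q1 Q2) (P3 : Cell V (rcomp R Ta) Q1) :
  let Psi := vcomp P1 (vcomp P2 P3) in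
  vcomp Psi (lwhisk R Amu)
  = vcomp (rwhisk Bmu R)
      (vcomp (assocR Tb Tb R)
      (vcomp (lwhisk Tb Psi)
      (vcomp (assocL Tb R Ta)
      (vcomp (rwhisk Psi Ta) (assocR R Ta Ta))))) ->
  let Conj := vcomp (lwhisk Tb (cellcast e)) (vcomp P1 (vcomp P2 (vcomp P3 (rwhisk (cellcast (eq_sym e)) Ta)))) in
  vcomp Conj (lwhisk R' Amu)
  = vcomp (rwhisk Bmu R')
      (vcomp (assocR Tb Tb R')
      (vcomp (lwhisk Tb Conj)
      (vcomp (assocL Tb R' Ta)
      (vcomp (rwhisk Conj Ta) (assocR R' Ta Ta))))).
Proof.
  destruct e. simpl. intros H. rewrite !lwhisk_id, !rwhisk_id, !vcomp_id_l, !vcomp_id_r.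
  exact H.
Qed.

Lemma part2 {X Y : Type}
          (a : Rel V X X) (eta_a : Cell V (idrel X) a) (mu_a : Cell V (rcomp a a) a)
          (b : Rel V Y Y) (eta_b : Cell V (idrel Y) b) (mu_b : Cell V (rcomp b b) b)
          (f : X -> Y) (phi : Cell V (rcomp (frel f) a) (rcomp b (frel f))) :
      isVFunctor a eta_a mu_a b eta_b mu_b f phi ->
      forall kinv : Cell V (Trel L (rcomp b (frel f)))
                           (rcomp (Trel L b) (Trel L (frel f))),
        vcomp kinv (kappa L b (frel f)) = idcell _ ->
        vcomp (kappa L b (frel f)) kinv = idcell _ ->
        isVFunctor (Trel L a) (Teta L eta_a) (Tmu L mu_a)
                   (Trel L b) (Teta L eta_b) (Tmu L mu_b)
                   (Tmap f) (Tconj L f f kinv phi).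
Proof.
  intros [Ha [Hb [Hu Hm]]] kinv Hk1 Hk2.
  split; [apply part1; exact Ha|]. split; [apply part1; exact Hb|]. split.
  - unfold Tconj. apply castU. apply coreU; assumption.
  - unfold Tconj. apply (castM (Trel L a) (Trel L b) _ _ _ _ _ kinv (Tcell L phi) (kappa L (frel f) a)).
    apply coreM; assumption.
Qed.

Lemma rw2 {A B C : Type} {t1 t2 t2' t3 : Rel V B C} (r : Rel V A B)
  (p : Cell V t2 t3) (q : Cell V t1 t2) (p' : Cell V t2' t3) (q' : Cell V t1 t2')
  (H : vcomp p q = vcomp p' q') {r0} (rest : Cell V r0 (rcomp t1 r)) :
  vcomp (rwhisk p r) (vcomp (rwhisk q r) rest) = vcomp (rwhisk p' r) (vcomp (rwhisk q' r) rest).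
Proof. rewrite <- !vcomp_assoc, !rwhisk_comp, H. reflexivity. Qed.
Lemma lw2 {A B C : Type} (t : Rel V B C) {r1 r2 r2' r3 : Rel V A B}
  (p : Cell V r2 r3) (q : Cell V r1 r2) (p' : Cell V r2' r3) (q' : Cell V r1 r2')
  (H : vcomp p q = vcomp p' q') {r0} (rest : Cell V r0 (rcomp t r1)) :
  vcomp (lwhisk t p) (vcomp (lwhisk t q) rest) = vcomp (lwhisk t p') (vcomp (lwhisk t q') rest).
Proof. rewrite <- !vcomp_assoc, !lwhisk_comp, H. reflexivity. Qed.

Ltac wsplit := repeat (rewrite <- lwhisk_comp || rewrite <- rwhisk_comp); vnorm.

Lemma core3a {X Y} (a : Rel V X X) (eta_a : Cell V (idrel X) a)
  (b : Rel V Y Y) (mu_b : Cell V (rcomp b b) b)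
  (f g : X -> Y) (phi_f : Cell V (rcomp (frel f) a) (rcomp b (frel f)))
  (zeta zeta' : Cell V (rcomp (frel g) a) (rcomp b (frel f)))
  (H : zeta = vcomp (rwhisk mu_b (frel f))
         (vcomp (assocR b b (frel f))
         (vcomp (lwhisk b phi_f)
         (vcomp (assocL b (frel f) a)
         (vcomp (rwhisk zeta' a)
         (vcomp (rwhisk (lwhisk (frel g) eta_a) a)
                (rwhisk (runit_inv (frel g)) a)))))))
  (kinv : Cell V (Trel L (rcomp b (frel f))) (rcomp (Trel L b) (Trel L (frel f))))
  (Hk1 : vcomp kinv (kappa L b (frel f)) = idcell _)
  (Hk2 : vcomp (kappa L b (frel f)) kinv = idcell _) :
  let Tf := Trel L (frel f) in let Tg := Trel L (frel g) in
  let Ta := Trel L a in let Tb := Trel L b in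
  vcomp kinv (vcomp (Tcell L zeta) (kappa L (frel g) a))
  = vcomp (rwhisk (Tmu L mu_b) Tf)
      (vcomp (assocR Tb Tb Tf)
      (vcomp (lwhisk Tb (vcomp kinv (vcomp (Tcell L phi_f) (kappa L (frel f) a))))
      (vcomp (assocL Tb Tf Ta)
      (vcomp (rwhisk (vcomp kinv (vcomp (Tcell L zeta') (kappa L (frel g) a))) Ta)
      (vcomp (rwhisk (lwhisk Tg (Teta L eta_a)) Ta)
             (rwhisk (runit_inv Tg) Ta)))))).
Proof.
  intros Tf Tg Ta Tb. unfold Tf, Tg, Ta, Tb, Tmu, Teta. rewrite H. rewrite !Tsplit. vnorm.
  vrwb (kn_r (runit_inv (frel g)) a). vrwb (kn_r (lwhisk (frel g) eta_a) a).
  vrwb (kn_r zeta' a). vrw (TaL b (frel f) a kinv Hk2). vrwb (kn_l b phi_f).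
  vrw (TaR b b (frel f) kinv Hk2). vrwb (kn_r mu_b (frel f)). vrw Hk1. rewrite vcomp_id_l.
  rewrite Trunit_inv. wsplit.
  rewrite (rw2 _ _ _ _ _ (eq_sym (kn_l (frel g) eta_a))). wsplit.
  reflexivity.
Qed.

Lemma core3b {X Y} (a : Rel V X X) (eta_a : Cell V (idrel X) a)
  (b : Rel V Y Y) (mu_b : Cell V (rcomp b b) b)
  (f g : X -> Y) (phi_g : Cell V (rcomp (frel g) a) (rcomp b (frel g)))
  (zeta zeta' : Cell V (rcomp (frel g) a) (rcomp b (frel f)))
  (H : zeta = vcomp (rwhisk mu_b (frel f))
         (vcomp (assocR b b (frel f))
         (vcomp (lwhisk b zeta')
         (vcomp (lwhisk b (lwhisk (frel g) eta_a))
         (vcomp (lwhisk b (runit_inv (frel g))) phi_g)))))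
  (kinv : Cell V (Trel L (rcomp b (frel f))) (rcomp (Trel L b) (Trel L (frel f))))
  (Hk1 : vcomp kinv (kappa L b (frel f)) = idcell _)
  (Hk2 : vcomp (kappa L b (frel f)) kinv = idcell _)
  (kinvg : Cell V (Trel L (rcomp b (frel g))) (rcomp (Trel L b) (Trel L (frel g))))
  (Hkg2 : vcomp (kappa L b (frel g)) kinvg = idcell _) :
  let Tf := Trel L (frel f) in let Tg := Trel L (frel g) in
  let Ta := Trel L a in let Tb := Trel L b in
  vcomp kinv (vcomp (Tcell L zeta) (kappa L (frel g) a))
  = vcomp (rwhisk (Tmu L mu_b) Tf)
      (vcomp (assocR Tb Tb Tf)
      (vcomp (lwhisk Tb (vcomp kinv (vcomp (Tcell L zeta') (kappa L (frel g) a))))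
      (vcomp (lwhisk Tb (lwhisk Tg (Teta L eta_a)))
      (vcomp (lwhisk Tb (runit_inv Tg))
         (vcomp kinvg (vcomp (Tcell L phi_g) (kappa L (frel g) a))))))).
Proof.
  intros Tf Tg Ta Tb. unfold Tf, Tg, Ta, Tb, Tmu, Teta. rewrite H. rewrite !Tsplit. vnorm.
  rewrite <- (vcomp_id_l (Tcell L phi_g)) at 1. rewrite <- Hkg2. vnorm.
  vrwb (kn_l b (runit_inv (frel g))). vrwb (kn_l b (lwhisk (frel g) eta_a)).
  vrwb (kn_l b zeta').
  vrw (TaR b b (frel f) kinv Hk2). vrwb (kn_r mu_b (frel f)). vrw Hk1. rewrite vcomp_id_l.
  rewrite Trunit_inv. wsplit.
  rewrite (lw2 _ _ _ _ _ (eq_sym (kn_l (frel g) eta_a))). wsplit.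
  reflexivity.
Qed.

Lemma cast3a {A B : Type} (Ta : Rel V A A) (Tb : Rel V B B) (Rf Rf' Rg Rg' : Rel V A B)
  (ef : Rf = Rf') (eg : Rg = Rg') (Aeta : Cell V (idrel A) Ta) (Bmu : Cell V (rcomp Tb Tb) Tb)
  {Q1 Q2 Q3 : Rel V A B} (P1 : Cell V Q2 (rcomp Tb Rf)) (P2 : Cell V Q1 Q2)
  (P3 : Cell V (rcomp Rg Ta) Q1) (F2 : Cell V Q3 Q2) (F3 : Cell V (rcomp Rf Ta) Q3) :
  vcomp P1 (vcomp P2 P3) = vcomp (rwhisk Bmu Rf) (vcomp (assocR Tb Tb Rf)
     (vcomp (lwhisk Tb (vcomp P1 (vcomp F2 F3))) (vcomp (assocL Tb Rf Ta)
     (vcomp (rwhisk (vcomp P1 (vcomp P2 P3)) Ta) (vcomp (rwhisk (lwhisk Rg Aeta) Ta)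
        (rwhisk (runit_inv Rg) Ta)))))) ->
  let Z := vcomp (lwhisk Tb (cellcast ef)) (vcomp P1 (vcomp P2 (vcomp P3 (rwhisk (cellcast (eq_sym eg)) Ta)))) in
  let Phi := vcomp (lwhisk Tb (cellcast ef)) (vcomp P1 (vcomp F2 (vcomp F3 (rwhisk (cellcast (eq_sym ef)) Ta)))) in
  Z = vcomp (rwhisk Bmu Rf') (vcomp (assocR Tb Tb Rf')
     (vcomp (lwhisk Tb Phi) (vcomp (assocL Tb Rf' Ta)
     (vcomp (rwhisk Z Ta) (vcomp (rwhisk (lwhisk Rg' Aeta) Ta)
        (rwhisk (runit_inv Rg') Ta)))))).
Proof.
  destruct ef, eg. simpl. intros H. rewrite !lwhisk_id, !rwhisk_id, !vcomp_id_l, !vcomp_id_r.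
  exact H.
Qed.

Lemma cast3b {A B : Type} (Ta : Rel V A A) (Tb : Rel V B B) (Rf Rf' Rg Rg' : Rel V A B)
  (ef : Rf = Rf') (eg : Rg = Rg') (Aeta : Cell V (idrel A) Ta) (Bmu : Cell V (rcomp Tb Tb) Tb)
  {Q1 Q2 Q4 Q5 : Rel V A B} (P1 : Cell V Q2 (rcomp Tb Rf)) (P2 : Cell V Q1 Q2)
  (P3 : Cell V (rcomp Rg Ta) Q1) (G1 : Cell V Q4 (rcomp Tb Rg)) (G2 : Cell V Q5 Q4)
  (G3 : Cell V (rcomp Rg Ta) Q5) :
  vcomp P1 (vcomp P2 P3) = vcomp (rwhisk Bmu Rf) (vcomp (assocR Tb Tb Rf)
     (vcomp (lwhisk Tb (vcomp P1 (vcomp P2 P3))) (vcomp (lwhisk Tb (lwhisk Rg Aeta))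
     (vcomp (lwhisk Tb (runit_inv Rg)) (vcomp G1 (vcomp G2 G3)))))) ->
  let Z := vcomp (lwhisk Tb (cellcast ef)) (vcomp P1 (vcomp P2 (vcomp P3 (rwhisk (cellcast (eq_sym eg)) Ta)))) in
  let Phig := vcomp (lwhisk Tb (cellcast eg)) (vcomp G1 (vcomp G2 (vcomp G3 (rwhisk (cellcast (eq_sym eg)) Ta)))) in
  Z = vcomp (rwhisk Bmu Rf') (vcomp (assocR Tb Tb Rf')
     (vcomp (lwhisk Tb Z) (vcomp (lwhisk Tb (lwhisk Rg' Aeta))
     (vcomp (lwhisk Tb (runit_inv Rg')) Phig)))).
Proof.
  destruct ef, eg. simpl. intros H. rewrite !lwhisk_id, !rwhisk_id, !vcomp_id_l, !vcomp_id_r.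
  exact H.
Qed.

Lemma part3 (X Y : Type)
          (a : Rel V X X) (eta_a : Cell V (idrel X) a) (mu_a : Cell V (rcomp a a) a)
          (b : Rel V Y Y) (eta_b : Cell V (idrel Y) b) (mu_b : Cell V (rcomp b b) b)
          (f : X -> Y) (phi_f : Cell V (rcomp (frel f) a) (rcomp b (frel f)))
          (g : X -> Y) (phi_g : Cell V (rcomp (frel g) a) (rcomp b (frel g)))
          (zeta : Cell V (rcomp (frel g) a) (rcomp b (frel f))) :
      isVNat a eta_a mu_a b eta_b mu_b f phi_f g phi_g zeta ->
      forall (kinv_f : Cell V (Trel L (rcomp b (frel f)))
                             (rcomp (Trel L b) (Trel L (frel f))))
             (kinv_g : Cell V (Trel L (rcomp b (frel g)))
                             (rcomp (Trel L b) (Trel L (frel g)))),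
        vcomp kinv_f (kappa L b (frel f)) = idcell _ ->
        vcomp (kappa L b (frel f)) kinv_f = idcell _ ->
        vcomp kinv_g (kappa L b (frel g)) = idcell _ ->
        vcomp (kappa L b (frel g)) kinv_g = idcell _ ->
        isVNat (Trel L a) (Teta L eta_a) (Tmu L mu_a)
               (Trel L b) (Teta L eta_b) (Tmu L mu_b)
               (Tmap f) (Tconj L f f kinv_f phi_f)
               (Tmap g) (Tconj L g g kinv_g phi_g)
               (Tconj L f g kinv_f zeta).
Proof.
  intros [Hf [Hg [H1 H2]]] kinv_f kinv_g Hf1 Hf2 Hg1 Hg2.
  split; [apply part2; assumption|]. split; [apply part2; assumption|]. split.
  - unfold Tconj.
    apply (cast3a (Trel L a) (Trel L b) _ _ _ _ _ _ _ _ kinv_f (Tcell L zeta) (kappa L (frel g) a)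
             (Tcell L phi_f) (kappa L (frel f) a)).
    apply (core3a a eta_a b mu_b f g phi_f zeta zeta H1 kinv_f Hf1 Hf2).
  - unfold Tconj.
    apply (cast3b (Trel L a) (Trel L b) _ _ _ _ _ _ _ _ kinv_f (Tcell L zeta) (kappa L (frel g) a)
             kinv_g (Tcell L phi_g) (kappa L (frel g) a)).
    apply (core3b a eta_a b mu_b f g phi_g zeta zeta H2 kinv_f Hf1 Hf2 kinv_g Hg2).
Qed.
End Lax.
Theorem mainTheorem3 (V : SMCC) (M : SetMonad) (L : LaxExt V M) :
  (* (1) (TX, Ta, T eta_a, T mu_a . kappa_{a,a}) is a V-category *)
  (forall (X : Type) (a : Rel V X X) (eta : Cell V (idrel X) a)
          (mu : Cell V (rcomp a a) a),
      isVCat a eta mu -> isVCat (Trel L a) (Teta L eta) (Tmu L mu)) /\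
  (* (2) (Tf, kappa^{-1}_{b,f} . T phi_f . kappa_{f,a}) is a V-functor *)
  (forall (X Y : Type)
          (a : Rel V X X) (eta_a : Cell V (idrel X) a) (mu_a : Cell V (rcomp a a) a)
          (b : Rel V Y Y) (eta_b : Cell V (idrel Y) b) (mu_b : Cell V (rcomp b b) b)
          (f : X -> Y) (phi : Cell V (rcomp (frel f) a) (rcomp b (frel f))),
      isVFunctor a eta_a mu_a b eta_b mu_b f phi ->
      forall kinv : Cell V (Trel L (rcomp b (frel f)))
                           (rcomp (Trel L b) (Trel L (frel f))),
        vcomp kinv (kappa L b (frel f)) = idcell _ ->
        vcomp (kappa L b (frel f)) kinv = idcell _ ->
        isVFunctor (Trel L a) (Teta L eta_a) (Tmu L mu_a)
                   (Trel L b) (Teta L eta_b) (Tmu L mu_b)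
                   (Tmap f) (Tconj L f f kinv phi)) /\
  (* (3) kappa^{-1}_{b,f} . T zeta . kappa_{g,a} is a V-natural transformation *)
  (forall (X Y : Type)
          (a : Rel V X X) (eta_a : Cell V (idrel X) a) (mu_a : Cell V (rcomp a a) a)
          (b : Rel V Y Y) (eta_b : Cell V (idrel Y) b) (mu_b : Cell V (rcomp b b) b)
          (f : X -> Y) (phi_f : Cell V (rcomp (frel f) a) (rcomp b (frel f)))
          (g : X -> Y) (phi_g : Cell V (rcomp (frel g) a) (rcomp b (frel g)))
          (zeta : Cell V (rcomp (frel g) a) (rcomp b (frel f))),
      isVNat a eta_a mu_a b eta_b mu_b f phi_f g phi_g zeta ->
      forall (kinv_f : Cell V (Trel L (rcomp b (frel f)))
                             (rcomp (Trel L b) (Trel L (frel f))))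
             (kinv_g : Cell V (Trel L (rcomp b (frel g)))
                             (rcomp (Trel L b) (Trel L (frel g)))),
        vcomp kinv_f (kappa L b (frel f)) = idcell _ ->
        vcomp (kappa L b (frel f)) kinv_f = idcell _ ->
        vcomp kinv_g (kappa L b (frel g)) = idcell _ ->
        vcomp (kappa L b (frel g)) kinv_g = idcell _ ->
        isVNat (Trel L a) (Teta L eta_a) (Tmu L mu_a)
               (Trel L b) (Teta L eta_b) (Tmu L mu_b)
               (Tmap f) (Tconj L f f kinv_f phi_f)
               (Tmap g) (Tconj L g g kinv_g phi_g)
               (Tconj L f g kinv_f zeta)).
Proof.
  split; [intros X a eta mu H; exact (part1 V M L a eta mu H)|].
  split.
  - intros. eapply part2; eassumption.
  - intros. eapply part3; eassumption.
Qed.
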